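(* Let $\mathcal U$ be a universal Martin-Löf test. Then $\mathsf{LAY}_{\mathcal U}\le_{\mathrm{sW}}\mathrm{C}_{\mathbb N}$ and $\mathrm{C}_{\mathbb N}\not\le_{\mathrm W}\mathsf{LAY}_{\mathcal U}$.
   Context: Cantor space $2^\omega$, Lebesgue measure $\lambda$. A Martin-Löf (ML) test is a sequence $(\mathcal V_i)_{i\in\omega}$ of open subsets of $2^\omega$ such that $\{\langle i,\sigma\rangle:[\sigma]\subseteq\mathcal V_i\}$ is c.e. and $\lambda(\mathcal V_i)\le 2^{-i}$; it is universal if $\bigcap_i\mathcal V'_i\subseteq\bigcap_i\mathcal V_i$ for every ML-test $\mathcal V'$. $\mathrm{MLR}$ is the set of Martin-Löf random sequences. A representation of a set $X$ is a surjective partial map $\delta_X:\subseteq\omega^\omega\to X$. A realizer of a multi-valued partial function $f:\subseteq X\rightrightarrows Y$ is a partial $\Gamma:\subseteq\omega^\omega\to\omega^\omega$ with $\delta_Y(\Gamma(p))\in f(\delta_X(p))$ for all $p\in\mathrm{dom}(f\circ\delta_X)$. $f\le_{\mathrm W} g$ if there are Turing functionals $\Phi,\Psi$ such that $p\mapsto\Psi(\langle p,\Gamma(\Phi(p))\rangle)$ realizes $f$ for every realizer $\Gamma$ of $g$; $f\le_{\mathrm{sW}} g$ if instead $\Psi\circ\Gamma\circ\Phi$ realizes $f$ for every realizer $\Gamma$ of $g$. $\mathrm{MLR}$ is represented by the identity on $\mathrm{MLR}\subseteq\omega^\omega$, $\omega$ by $\chi_{\{n\}}\mapsto n$, and $\omega^\omega$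 by the identity. $\mathsf{LAY}_{\mathcal U}\colon\mathrm{MLR}\rightrightarrows\omega$, $\mathsf{LAY}_{\mathcal U}(X)=\{i:X\notin\mathcal U_i\}$. $\mathrm{C}_{\mathbb N}\colon\subseteq\omega^\omega\rightrightarrows\omega$ has domain $\{f\in\omega^\omega:\exists n\,\forall k\,(f(k)\ne n+1)\}$ and $\mathrm{C}_{\mathbb N}(f)=\omega\setminus\{n:\exists k\,(f(k)=n+1)\}$. *)

(* Defs.v *)
(* Computability is modelled by Kleene-style partial recursive
   functions relative to an oracle p : nat -> nat (unary, with Cantor pairing). *)
From Stdlib Require Import Arith List Cantor.
Import ListNotations.

Definition cpair (x y : nat) : nat := Cantor.to_nat (x, y).
Definition cfst (n : nat) : nat := fst (Cantor.of_nat n).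
Definition csnd (n : nat) : nat := snd (Cantor.of_nat n).

Inductive prf : Type :=
| PZero | PSucc | PId | PFst | PSnd
| POracle
| PComp (f g : prf)
| PPair (f g : prf)
| PRec (f g : prf)
| PMu (f : prf).

Inductive eval (p : nat -> nat) : prf -> nat -> nat -> Prop :=
| ev_zero x : eval p PZero x 0
| ev_succ x : eval p PSucc x (S x)
| ev_id x : eval p PId x x
| ev_fst x : eval p PFst x (cfst x)
| ev_snd x : eval p PSnd x (csnd x)
| ev_oracle x : eval p POracle x (p x)
| ev_comp f g x y z : eval p g x y -> eval p f y z -> eval p (PComp f g) x z
| ev_pair f g x a b : eval p f x a -> eval p g x b -> eval p (PPair f g) x (cpair a b)
| ev_rec0 f g x v : eval p f x v -> eval p (PRec f g) (cpair x 0) v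
| ev_recS f g x n w v : eval p (PRec f g) (cpair x n) w ->
    eval p g (cpair x (cpair n w)) v -> eval p (PRec f g) (cpair x (S n)) v
| ev_mu f x n : eval p f (cpair x n) 0 ->
    (forall m, m < n -> exists k, eval p f (cpair x m) (S k)) ->
    eval p (PMu f) x n.

Definition tf (e : prf) (p q : nat -> nat) : Prop :=
  forall n, eval p e n (q n).

Definition ce (S : nat -> Prop) : Prop :=
  exists e : prf, forall n, S n <-> exists v, eval (fun _ => 0) e n v.

Definition cantor := nat -> bool.
Definition baire := nat -> nat.

Fixpoint code (s : list bool) : nat :=
  match s with
  | [] => 0
  | b :: s' => 2 * code s' + (if b then 2 else 1)
  end.

Definition cyl (s : list bool) : cantor -> Prop :=
  fun X => forall k, k < length s -> X k = nth k s false.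

Definition subset (A B : cantor -> Prop) : Prop := forall X, A X -> B X.

Definition is_open (V : cantor -> Prop) : Prop :=
  forall X, V X -> exists n, forall Y, (forall k, k < n -> Y k = X k) -> V Y.

(** Lebesgue measure of an open set V is sup_n (#{s : |s| = n, [s] ⊆ V}) / 2^n.
    [measure_open_le_pow2 V i] says lambda(V) <= 2^-i. *)
Definition measure_open_le_pow2 (V : cantor -> Prop) (i : nat) : Prop :=
  forall (n : nat) (L : list (list bool)), NoDup L ->
    (forall s, In s L -> length s = n /\ subset (cyl s) V) ->
    length L * 2 ^ i <= 2 ^ n.

Definition ML_test (V : nat -> cantor -> Prop) : Prop :=
  (forall i, is_open (V i)) /\
  ce (fun m => exists i s, m = cpair i (code s) /\ subset (cyl s) (V i)) /\
  (forall i, measure_open_le_pow2 (V i) i).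

Definition bigcap (V : nat -> cantor -> Prop) : cantor -> Prop :=
  fun X => forall i, V i X.

Definition universal_ML_test (U : nat -> cantor -> Prop) : Prop :=
  ML_test U /\ forall V, ML_test V -> subset (bigcap V) (bigcap U).

Definition MLR (X : cantor) : Prop :=
  forall V, ML_test V -> ~ bigcap V X.

(** Represented spaces: a representation is a relation [rep p x] : p names x. *)
Definition b2n (b : bool) : nat := if b then 1 else 0.

Definition rep_MLR (p : baire) (X : cantor) : Prop :=
  MLR X /\ forall n, p n = b2n (X n).

Definition rep_nat (p : baire) (n : nat) : Prop :=
  forall m, p m = (if Nat.eqb m n then 1 else 0).

Definition rep_baire (p : baire) (f : baire) : Prop := p = f.

(** A (multi-valued, partial) function f :⊆ X ⇉ Y is given by its domain [dom]
    and its value relation [f x y] (y ∈ f(x)).  A partial function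
    Γ :⊆ ω^ω → ω^ω is a functional relation [G p q] (Γ(p) = q). *)
Definition functional_rel (G : baire -> baire -> Prop) : Prop :=
  forall p q q', G p q -> G p q' -> q = q'.

Definition realizes {X Y : Type} (repX : baire -> X -> Prop) (repY : baire -> Y -> Prop)
  (dom : X -> Prop) (f : X -> Y -> Prop) (G : baire -> baire -> Prop) : Prop :=
  forall p x, repX p x -> dom x ->
    (exists q, G p q) /\ (forall q, G p q -> exists y, repY q y /\ f x y).

Definition is_realizer {X Y : Type} (repX : baire -> X -> Prop) (repY : baire -> Y -> Prop)
  (dom : X -> Prop) (f : X -> Y -> Prop) (G : baire -> baire -> Prop) : Prop :=
  functional_rel G /\ realizes repX repY dom f G.

Definition join (p q : baire) : baire :=
  fun n => if Nat.even n then p (Nat.div2 n) else q (Nat.div2 n).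

Definition W_le {X Y Z W : Type}
  (repX : baire -> X -> Prop) (repY : baire -> Y -> Prop) (domf : X -> Prop) (f : X -> Y -> Prop)
  (repZ : baire -> Z -> Prop) (repW : baire -> W -> Prop) (domg : Z -> Prop) (g : Z -> W -> Prop)
  : Prop :=
  exists Phi Psi : prf, forall G, is_realizer repZ repW domg g G ->
    realizes repX repY domf f
      (fun p r => exists q s, tf Phi p q /\ G q s /\ tf Psi (join p s) r).

Definition sW_le {X Y Z W : Type}
  (repX : baire -> X -> Prop) (repY : baire -> Y -> Prop) (domf : X -> Prop) (f : X -> Y -> Prop)
  (repZ : baire -> Z -> Prop) (repW : baire -> W -> Prop) (domg : Z -> Prop) (g : Z -> W -> Prop)
  : Prop :=
  exists Phi Psi : prf, forall G, is_realizer repZ repW domg g G ->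
    realizes repX repY domf f
      (fun p r => exists q s, tf Phi p q /\ G q s /\ tf Psi s r).

Definition LAY_dom (X : cantor) : Prop := MLR X.
Definition LAY (U : nat -> cantor -> Prop) (X : cantor) (i : nat) : Prop := ~ U i X.

Definition CN_dom (f : baire) : Prop := exists n, forall k, f k <> S n.
Definition CN (f : baire) (n : nat) : Prop := forall k, f k <> S n.

(* Main.v *)
Require Import Defs.
From Stdlib Require Import Arith List Lia Cantor Classical FunctionalExtensionality ClassicalEpsilon.
Import ListNotations.

Lemma cfst_pair a b : cfst (cpair a b) = a.
Proof. unfold cfst, cpair. rewrite Cantor.cancel_of_to. reflexivity. Qed.
Lemma csnd_pair a b : csnd (cpair a b) = b.
Proof. unfold csnd, cpair. rewrite Cantor.cancel_of_to. reflexivity. Qed.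
Lemma cpair_surj n : cpair (cfst n) (csnd n) = n.
Proof. unfold cfst, csnd, cpair. rewrite <- surjective_pairing. apply Cantor.cancel_to_of. Qed.
Lemma cpair_inj a b c d : cpair a b = cpair c d -> a = c /\ b = d.
Proof. intro H. split.
 - rewrite <- (cfst_pair a b), H. apply cfst_pair.
 - rewrite <- (csnd_pair a b), H. apply csnd_pair. Qed.
Global Opaque cpair cfst csnd.
Hint Rewrite cfst_pair csnd_pair : cp.

Definition computes (p : nat -> nat) (e : prf) (F : nat -> nat) := forall x, eval p e x (F x).
Lemma computes_ext p e F G : computes p e F -> (forall x, F x = G x) -> computes p e G.
Proof. intros H E x. rewrite <- E. apply H. Qed.
Lemma c_zero p : computes p PZero (fun _ => 0). Proof. intro; constructor. Qed.
Lemma c_succ p : computes p PSucc S. Proof. intro; constructor. Qed.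
Lemma c_id p : computes p PId (fun x => x). Proof. intro; constructor. Qed.
Lemma c_fst p : computes p PFst cfst. Proof. intro; constructor. Qed.
Lemma c_snd p : computes p PSnd csnd. Proof. intro; constructor. Qed.
Lemma c_oracle p : computes p POracle p. Proof. intro; constructor. Qed.
Lemma c_comp p f g F G : computes p f F -> computes p g G -> computes p (PComp f g) (fun x => F (G x)).
Proof. intros Hf Hg x. econstructor; eauto. Qed.
Lemma c_pair p f g F G : computes p f F -> computes p g G -> computes p (PPair f g) (fun x => cpair (F x) (G x)).
Proof. intros Hf Hg x. econstructor; eauto. Qed.
Fixpoint iterR (F G : nat -> nat) (x n : nat) : nat :=
  match n with 0 => F x | S n' => G (cpair x (cpair n' (iterR F G x n'))) end.
Lemma c_rec p f g F G : computes p f F -> computes p g G ->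
  computes p (PRec f g) (fun z => iterR F G (cfst z) (csnd z)).
Proof. intros Hf Hg z.
  assert (H : forall x n, eval p (PRec f g) (cpair x n) (iterR F G x n)).
  { intros x n; induction n; simpl; econstructor; eauto. }
  specialize (H (cfst z) (csnd z)). rewrite cpair_surj in H. exact H. Qed.

Definition Cond (h0 h1 : prf) := PRec h0 (PComp h1 (PPair PFst (PComp PFst PSnd))).
Lemma c_cond p h0 h1 F0 F1 : computes p h0 F0 -> computes p h1 F1 ->
  computes p (Cond h0 h1) (fun z => match csnd z with 0 => F0 (cfst z) | S n => F1 (cpair (cfst z) n) end).
Proof. intros H0 H1. eapply computes_ext.
  - apply c_rec; [eassumption | apply c_comp; [eassumption | apply c_pair; [apply c_fst | apply c_comp; [apply c_fst | apply c_snd]]]].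
  - intro z. cbv beta. destruct (csnd z); simpl; autorewrite with cp; reflexivity. Qed.
Definition Case (a h0 h1 : prf) := PComp (Cond h0 h1) (PPair PId a).
Lemma c_case p a h0 h1 A F0 F1 : computes p a A -> computes p h0 F0 -> computes p h1 F1 ->
  computes p (Case a h0 h1) (fun z => match A z with 0 => F0 z | S n => F1 (cpair z n) end).
Proof. intros Ha H0 H1. eapply computes_ext.
  - apply c_comp; [apply c_cond; eassumption | apply c_pair; [apply c_id | eassumption]].
  - intro z. cbv beta. autorewrite with cp. reflexivity. Qed.

Ltac prog := repeat first [ apply c_case | apply c_cond | apply c_rec | apply c_comp | apply c_pair
  | apply c_zero | apply c_succ | apply c_id | apply c_fst | apply c_snd | apply c_oracle | eassumption ].

Definition P1 := PComp PSucc PZero.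
Definition Pred := PComp (PRec PZero (PComp PFst PSnd)) (PPair PZero PId).
Lemma c_pred p : computes p Pred pred.
Proof. eapply computes_ext. unfold Pred. prog. intro z. cbv beta. autorewrite with cp.
  destruct z; simpl; autorewrite with cp; reflexivity. Qed.
Definition PAdd := PRec PId (PComp PSucc (PComp PSnd PSnd)).
Lemma c_add p : computes p PAdd (fun z => cfst z + csnd z).
Proof. eapply computes_ext. unfold PAdd. prog. intro z. cbv beta.
  generalize (cfst z) (csnd z). intros a n; induction n; simpl; autorewrite with cp; lia. Qed.
Definition PMul := PRec PZero (PComp PAdd (PPair (PComp PSnd PSnd) PFst)).
Lemma c_mul p : computes p PMul (fun z => cfst z * csnd z).
Proof. eapply computes_ext. unfold PMul. apply c_rec; [apply c_zero| apply c_comp; [apply c_add| prog]]. intro z. cbv beta.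
  generalize (cfst z) (csnd z). intros a n; induction n; simpl; autorewrite with cp; [lia|].
  rewrite IHn. lia. Qed.
Definition PSub := PRec PId (PComp Pred (PComp PSnd PSnd)).
Lemma c_sub p : computes p PSub (fun z => cfst z - csnd z).
Proof. eapply computes_ext. unfold PSub. apply c_rec; [apply c_id| apply c_comp; [apply c_pred| prog]]. intro z. cbv beta.
  generalize (cfst z) (csnd z). intros a n; induction n; simpl; autorewrite with cp; [lia|].
  rewrite IHn. lia. Qed.

Ltac prog2 := repeat first [ apply c_add | apply c_mul | apply c_sub | apply c_pred | apply c_case | apply c_cond | apply c_rec | apply c_comp | apply c_pair
  | apply c_zero | apply c_succ | apply c_id | apply c_fst | apply c_snd | apply c_oracle | eassumption ].

Definition enc (o : option nat) := match o with Some v => S v | None => 0 end.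
Fixpoint recloop (Rf Rg : nat -> option nat) (y n : nat) : option nat :=
  match n with 0 => Rf y | S n' => match recloop Rf Rg y n' with Some w => Rg (cpair y (cpair n' w)) | None => None end end.
Fixpoint mustate (R : nat -> option nat) (x m : nat) : nat :=
  match m with 0 => 1 | S m' => match mustate R x m' with
     | 1 => match R (cpair x m') with Some 0 => S (S m') | Some (S _) => 1 | None => 0 end
     | s => s end end.
Definition mudec (s : nat) : option nat := match s with S (S m) => Some m | _ => None end.
Fixpoint run (e : prf) (t x : nat) : option nat :=
  match e with
  | PZero => Some 0 | PSucc => Some (S x) | PId => Some x | PFst => Some (cfst x) | PSnd => Some (csnd x) | POracle => Some 0
  | PComp f g => match run g t x with Some y => run f t y | None => None end
  | PPair f g => match run f t x with Some a => match run g t x with Some b => Some (cpair a b) | None => None end | None => None end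
  | PRec f g => recloop (run f t) (run g t) (cfst x) (csnd x)
  | PMu f => mudec (mustate (run f t) x t)
  end.

Definition T3 := PComp PFst (PComp PFst PFst).
Definition Y3 := PComp PSnd (PComp PFst PFst).
Definition J3 := PComp PFst (PComp PSnd PFst).
Fixpoint clk (e : prf) : prf :=
  match e with
  | PZero => P1
  | PSucc => PComp PSucc (PComp PSucc PSnd)
  | PId => PComp PSucc PSnd
  | PFst => PComp PSucc (PComp PFst PSnd)
  | PSnd => PComp PSucc (PComp PSnd PSnd)
  | POracle => P1
  | PComp f g => Case (clk g) PZero (PComp (clk f) (PPair (PComp PFst PFst) PSnd))
  | PPair f g => Case (clk f) PZero (Case (PComp (clk g) PFst) PZero (PComp PSucc (PPair (PComp PSnd PFst) PSnd)))
  | PRec f g => PComp (PRec (clk f) (Case (PComp PSnd PSnd) PZero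
                        (PComp (clk g) (PPair T3 (PPair Y3 (PPair J3 PSnd))))))
                      (PPair (PPair PFst (PComp PFst PSnd)) (PComp PSnd PSnd))
  | PMu f => PComp Pred (PComp (PRec P1
       (Case (PComp PSnd PSnd) PZero
          (Case PSnd
             (Case (PComp (clk f) (PPair T3 (PPair Y3 J3))) PZero
                (Case PSnd (PComp PSucc (PComp PSucc (PComp PFst (PComp PSnd (PComp PFst PFst))))) P1))
             (PComp PSucc (PComp PSucc PSnd)))))
     (PPair PId PFst))
  end.

Lemma clk_ok e p : computes p (clk e) (fun z => enc (run e (cfst z) (csnd z))).
Proof.
  induction e; simpl clk.
  1-6: eapply computes_ext; [unfold P1; prog2 | intro z; reflexivity].
  - eapply computes_ext; [prog2 | ]. intro z; cbv beta. simpl run.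
    destruct (run e2 (cfst z) (csnd z)); simpl; autorewrite with cp; reflexivity.
  - eapply computes_ext; [prog2 | ]. intro z; cbv beta. simpl run.
    destruct (run e1 (cfst z) (csnd z)); simpl; autorewrite with cp; [|reflexivity].
    destruct (run e2 (cfst z) (csnd z)); simpl; autorewrite with cp; reflexivity.
  - eapply computes_ext; [unfold T3, Y3, J3; prog2 | ]. intro z; cbv beta. simpl run.
    autorewrite with cp. generalize (csnd (csnd z)). intro n. induction n; simpl; autorewrite with cp; [reflexivity|].
    rewrite IHn. destruct (recloop _ _ _ n); simpl; autorewrite with cp; reflexivity.
  - eapply computes_ext; [unfold T3, Y3, J3, P1; prog2 | ]. intro z; cbv beta. simpl run.
    autorewrite with cp.
    match goal with |- pred (iterR ?F ?G z _) = _ =>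
      assert (H: forall m, iterR F G z m = mustate (run e (cfst z)) (csnd z) m) end.
    { intro m; induction m; [reflexivity|]. simpl iterR. rewrite IHm. cbv beta. autorewrite with cp.
      simpl mustate. destruct (mustate (run e (cfst z)) (csnd z) m) as [|[|s]];
      cbv beta iota; autorewrite with cp; cbv beta iota; try reflexivity.
      destruct (run e (cfst z) (cpair (csnd z) m)) as [[|r]|]; unfold enc; cbv beta iota; autorewrite with cp; cbv beta iota; autorewrite with cp; reflexivity. }
    rewrite H. destruct (mustate (run e (cfst z)) (csnd z) (cfst z)) as [|[|s]]; reflexivity.
Qed.

Definition z0 : nat -> nat := fun _ => 0.

Lemma mustate_char R x m k : mustate R x m = S (S k) ->
  k < m /\ R (cpair x k) = Some 0 /\ forall j, j < k -> exists r, R (cpair x j) = Some (S r).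
Proof.
  assert (Hinv : forall m, mustate R x m = 0 \/ (mustate R x m = 1 /\ forall j, j < m -> exists r, R (cpair x j) = Some (S r))
     \/ exists k, mustate R x m = S (S k) /\ k < m /\ R (cpair x k) = Some 0 /\ forall j, j < k -> exists r, R (cpair x j) = Some (S r)).
  { induction m0 as [|m0 IH]; simpl.
    - right; left; split; [reflexivity| intros; lia].
    - destruct IH as [H|[[H1 H2]|[k0 [H1 [H2 [H3 H4]]]]]].
      + left; rewrite H; reflexivity.
      + rewrite H1. destruct (R (cpair x m0)) as [[|r]|] eqn:E.
        * right; right. exists m0. repeat split; auto.
        * right; left. split; [reflexivity|]. intros j Hj. destruct (Nat.eq_dec j m0); [subst; eauto| apply H2; lia].
        * left; reflexivity.
      + rewrite H1. right; right. exists k0. repeat split; auto. }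
  intro H. destruct (Hinv m) as [H0|[[H1 _]|[k0 [H1 [H2 [H3 H4]]]]]]; rewrite H in *; try discriminate.
  injection H1 as ->. auto.
Qed.

Lemma mustate_one R x m : (forall j, j < m -> exists r, R (cpair x j) = Some (S r)) -> mustate R x m = 1.
Proof. induction m; intro H; simpl; [reflexivity|]. rewrite IHm by (intros; apply H; lia).
  destruct (H m) as [r Hr]; [lia|]. rewrite Hr. reflexivity. Qed.

Lemma mustate_found R x m k : k < m -> R (cpair x k) = Some 0 -> (forall j, j < k -> exists r, R (cpair x j) = Some (S r)) ->
  mustate R x m = S (S k).
Proof. induction m; intros Hk H0 H1; [lia|]. simpl.
  destruct (Nat.eq_dec k m).
  - subst. rewrite mustate_one by exact H1. rewrite H0. reflexivity.
  - rewrite IHm by (auto; lia). reflexivity. Qed.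

Lemma run_sound e : forall t x v, run e t x = Some v -> eval z0 e x v.
Proof.
  induction e; intros t x v H; simpl in H;
   try (injection H as <-; constructor).
  - destruct (run e2 t x) eqn:E; [|discriminate]. econstructor; eauto.
  - destruct (run e1 t x) eqn:E1; [|discriminate]. destruct (run e2 t x) eqn:E2; [|discriminate].
    injection H as <-. econstructor; eauto.
  - rewrite <- (cpair_surj x). revert v H. generalize (cfst x) (csnd x). intros y n. induction n; simpl; intros v H.
    + constructor. eauto.
    + destruct (recloop _ _ y n) eqn:E; [|discriminate]. econstructor; eauto.
  - unfold mudec in H. destruct (mustate (run e t) x t) as [|[|k]] eqn:E; try discriminate.
    injection H as <-. apply mustate_char in E as [_ [H1 H2]].
    constructor; eauto. intros m Hm. destruct (H2 m Hm) as [r Hr]; eauto.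
Qed.

Lemma run_mono e : forall t t' x v, t <= t' -> run e t x = Some v -> run e t' x = Some v.
Proof.
  induction e; intros t t' x v Ht H; simpl in *; auto.
  - destruct (run e2 t x) eqn:E; [|discriminate]. erewrite IHe2 by eauto. eauto.
  - destruct (run e1 t x) eqn:E1; [|discriminate]. destruct (run e2 t x) eqn:E2; [|discriminate].
    erewrite IHe1 by eauto. erewrite IHe2 by eauto. auto.
  - revert v H. generalize (cfst x) (csnd x). intros y n. induction n; simpl; intros v H; eauto.
    destruct (recloop (run e1 t) _ y n) eqn:E; [|discriminate]. erewrite IHn by eauto. eauto.
  - unfold mudec in *. destruct (mustate (run e t) x t) as [|[|k]] eqn:E; try discriminate.
    injection H as <-. apply mustate_char in E as [Hk [H1 H2]].
    rewrite (mustate_found _ _ _ k); [reflexivity| lia | eauto |].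
    intros j Hj. destruct (H2 j Hj) as [r Hr]. eauto.
Qed.

Lemma uniform_fuel (P : nat -> nat -> Prop) n :
  (forall m t t', t <= t' -> P m t -> P m t') -> (forall m, m < n -> exists t, P m t) ->
  exists T, forall m, m < n -> P m T.
Proof. intros Hm. induction n; intro H. - exists 0; intros; lia.
  - destruct IHn as [T HT]; [intros; apply H; lia|]. destruct (H n) as [t Ht]; [lia|].
    exists (max T t). intros m Hmn. destruct (Nat.eq_dec m n).
    + subst. eapply Hm; [|eauto]. lia.
    + eapply Hm; [|apply HT; lia]. lia. Qed.

Lemma run_complete e : forall x v, eval z0 e x v -> exists t, run e t x = Some v.
Proof.
  induction e; intros x v H.
  1-6: inversion H; subst; exists 0; reflexivity.
  - inversion H; subst. match goal with H2 : eval _ e2 _ ?y, H4 : eval _ e1 ?y _ |- _ =>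
    destruct (IHe2 _ _ H2) as [t1 E1]; destruct (IHe1 _ _ H4) as [t2 E2] end.
    exists (max t1 t2). simpl. erewrite (run_mono e2 t1) by (eauto; lia). eapply run_mono; [|eauto]. lia.
  - inversion H; subst. match goal with H2 : eval _ e1 _ _, H4 : eval _ e2 _ _ |- _ =>
    destruct (IHe1 _ _ H2) as [t1 E1]; destruct (IHe2 _ _ H4) as [t2 E2] end.
    exists (max t1 t2). simpl. erewrite (run_mono e1 t1) by (eauto; lia). erewrite (run_mono e2 t2) by (eauto; lia). reflexivity.
  - remember (PRec e1 e2) as E. induction H; try discriminate; injection HeqE as -> ->.
    + destruct (IHe1 _ _ H) as [t Ht]. exists t. simpl. autorewrite with cp. exact Ht.
    + destruct (IHeval1 eq_refl) as [t1 E1]. destruct (IHe2 _ _ H0) as [t2 E2].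
      exists (max t1 t2). simpl in *. autorewrite with cp in *.
      assert (Hm : forall t t' y n w, t <= t' -> recloop (run e1 t) (run e2 t) y n = Some w -> recloop (run e1 t') (run e2 t') y n = Some w).
      { intros t t' y n0. induction n0; simpl; intros w0 Ht Hr; [eapply run_mono; eauto|].
        destruct (recloop (run e1 t) _ y n0) eqn:E; [|discriminate]. erewrite IHn0 by eauto. eapply run_mono; eauto. }
      simpl. rewrite (Hm t1 (max t1 t2) _ _ _ ltac:(lia) E1). eapply run_mono; [|eauto]. lia.
  - inversion H; subst. destruct (IHe _ _ H1) as [t0 E0].
    destruct (uniform_fuel (fun m t => exists k, run e t (cpair x m) = Some (S k)) v) as [T HT].
    + intros m t t' Ht [k Hk]. exists k. eapply run_mono; eauto.
    + intros m Hm. destruct (H2 m Hm) as [k Hk]. destruct (IHe _ _ Hk) as [t Ht]. eauto.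
    + exists (max T (max t0 (S v))). simpl. rewrite (mustate_found _ _ _ v); [reflexivity| lia | |].
      * eapply run_mono; [|eauto]. lia.
      * intros j Hj. destruct (HT j Hj) as [k Hk]. exists k. eapply run_mono; [|eauto]. lia.
Qed.

Ltac cpinj := repeat match goal with H : cpair _ _ = cpair _ _ |- _ =>
  apply cpair_inj in H; destruct H as [? ?]; subst end.

Lemma rec_inv p f g z v : eval p (PRec f g) z v ->
  (exists x, z = cpair x 0 /\ eval p f x v) \/
  (exists x n w, z = cpair x (S n) /\ eval p (PRec f g) (cpair x n) w /\ eval p g (cpair x (cpair n w)) v).
Proof. intro H. remember (PRec f g) as E. destruct H; try discriminate; injection HeqE as -> ->.
  - left; eauto. - right; eauto 10. Qed.

Lemma rec_det p f g : (forall x v v', eval p f x v -> eval p f x v' -> v = v') ->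
  (forall x v v', eval p g x v -> eval p g x v' -> v = v') ->
  forall z v, eval p (PRec f g) z v -> forall v', eval p (PRec f g) z v' -> v = v'.
Proof.
  intros Hf Hg z w Hw. remember (PRec f g) as E. induction Hw; try discriminate; injection HeqE as -> ->;
  intros v' Hv'; destruct (rec_inv _ _ _ _ _ Hv') as [[x1 [E1 H1]]|[x1 [n1 [w1 [E1 [H1 H2]]]]]]; cpinj; try discriminate.
  - eauto.
  - match goal with H : S ?a = S ?b |- _ => assert (a = b) by congruence; subst b end.
    assert (w = w1) by eauto. subst. eauto.
Qed.

Lemma eval_det e : forall p x v v', eval p e x v -> eval p e x v' -> v = v'.
Proof.
  induction e; intros p x v v' H1 H2.
  7: { inversion H1; inversion H2; subst. assert (y = y0) by (eapply IHe2; eauto). subst. eapply IHe1; eauto. }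
  7: { inversion H1; inversion H2; subst. f_equal; [eapply IHe1|eapply IHe2]; eauto. }
  7: { eapply rec_det; [intros; eapply IHe1|intros; eapply IHe2|..]; eauto. }
  7: { inversion H1; inversion H2; subst.
       destruct (Nat.lt_trichotomy v v') as [Hl|[He|Hl]]; auto.
       - match goal with H : forall m, m < v' -> _ |- _ => destruct (H v Hl) as [k Hk] end.
         assert (0 = S k) by (eapply IHe; [|exact Hk]; eassumption). discriminate.
       - match goal with H : forall m, m < v -> _ |- _ => destruct (H v' Hl) as [k Hk] end.
         assert (0 = S k) by (eapply IHe; [|exact Hk]; eassumption). discriminate. }
  all: inversion H1; inversion H2; subst; auto.
Qed.

Definition pref (X : cantor) N := map X (seq 0 N).
Lemma pref_len X N : length (pref X N) = N.
Proof. unfold pref. rewrite length_map, length_seq. reflexivity. Qed.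
Lemma nth_pref X N k : k < N -> nth k (pref X N) false = X k.
Proof. intro H. unfold pref. rewrite nth_indep with (d' := X 0) by (rewrite length_map, length_seq; lia).
  rewrite map_nth, seq_nth by lia. reflexivity. Qed.
Lemma pref_S X N : pref X (S N) = pref X N ++ [X N].
Proof. unfold pref. rewrite seq_S, map_app. reflexivity. Qed.
Lemma cyl_pref X N : cyl (pref X N) X.
Proof. intros k Hk. rewrite pref_len in Hk. rewrite nth_pref; auto. Qed.

Lemma code_app l1 l2 : code (l1 ++ l2) = code l1 + 2 ^ (length l1) * code l2.
Proof. induction l1; simpl; [lia|]. rewrite IHl1. destruct a; lia. Qed.
Lemma code_inj s1 : forall s2, code s1 = code s2 -> s1 = s2.
Proof. induction s1 as [|a s1 IH]; intros [|b s2]; simpl; intro H.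
  - reflexivity. - destruct b; lia. - destruct a; lia.
  - destruct a, b; try lia; f_equal; apply IH; lia. Qed.
Lemma code_surj c : exists s, code s = c.
Proof. induction c as [c IH] using (well_founded_induction lt_wf).
  destruct c as [|c]. - exists []; reflexivity.
  - destruct (Nat.Even_or_Odd c) as [[k Hk]|[k Hk]].
    + destruct (IH k ltac:(lia)) as [s Hs]. exists (false :: s). simpl. lia.
    + destruct (IH k ltac:(lia)) as [s Hs]. exists (true :: s). simpl. lia. Qed.

Fixpoint cstate (b : nat -> nat) (N : nat) : nat * nat :=
  match N with 0 => (0, 1) | S j => (fst (cstate b j) + snd (cstate b j) * S (b j), snd (cstate b j) + snd (cstate b j)) end.
Lemma cstate_code b X N : (forall j, b j = b2n (X j)) -> fst (cstate b N) = code (pref X N) /\ snd (cstate b N) = 2 ^ N.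
Proof. intro Hb. induction N; [simpl; auto|]. destruct IHN as [H1 H2]. rewrite pref_S, code_app, pref_len.
  simpl cstate. rewrite H1, H2, Hb. simpl. destruct (X N); simpl; lia. Qed.

Definition ST := PComp PSnd PSnd.
Definition JJ := PComp PFst PSnd.
Definition Stp (B : prf) := PPair (PComp PAdd (PPair (PComp PFst ST) (PComp PMul (PPair (PComp PSnd ST) (PComp PSucc (PComp B JJ))))))
   (PComp PAdd (PPair (PComp PSnd ST) (PComp PSnd ST))).
Definition CodeProg (B : prf) := PComp (PRec (PPair PZero P1) (Stp B)) (PPair PZero PId).
Lemma c_code p B b : computes p B b -> computes p (CodeProg B) (fun N => cpair (fst (cstate b N)) (snd (cstate b N))).
Proof. intro HB. eapply computes_ext; [unfold CodeProg, Stp, ST, JJ, P1; prog2|].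
  intro N. cbv beta. autorewrite with cp. induction N; simpl; [reflexivity|]. rewrite IHN. autorewrite with cp. reflexivity. Qed.

Ltac prog3 := repeat first [ apply clk_ok | apply c_code | apply c_add | apply c_mul | apply c_sub | apply c_pred | apply c_case | apply c_cond | apply c_rec | apply c_comp | apply c_pair
  | apply c_zero | apply c_succ | apply c_id | apply c_fst | apply c_snd | apply c_oracle | eassumption ].

Definition Phi1 e := PComp (Cond PZero (PComp PSucc PFst)) (PPair PFst (PComp (clk e)
   (PPair (PComp PSnd PSnd) (PPair PFst (PComp PFst (PComp (CodeProg POracle) (PComp PFst PSnd))))))).
Definition qF (p : nat -> nat) e k := match enc (run e (csnd (csnd k)) (cpair (cfst k) (fst (cstate p (cfst (csnd k)))))) with 0 => 0 | S _ => S (cfst k) end.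
Lemma c_phi1 p e : computes p (Phi1 e) (qF p e).
Proof. eapply computes_ext; [unfold Phi1; prog3|].
  intro k. cbv beta. autorewrite with cp. unfold qF. destruct (enc _); autorewrite with cp; reflexivity. Qed.

Lemma MLR_layer U X : ML_test U -> MLR X -> exists i, ~ U i X.
Proof. intros HU HX. apply not_all_ex_not. exact (HX U HU). Qed.

Lemma tf_det e p q q' : tf e p q -> tf e p q' -> q = q'.
Proof. intros H1 H2. apply functional_extensionality. intro n. eapply eval_det; eauto. Qed.

Lemma part1 U : universal_ML_test U -> sW_le rep_MLR rep_nat LAY_dom (LAY U) rep_baire rep_nat CN_dom CN.
Proof.
  intros [HU Huniv]. pose proof HU as [Hopen [[e He] Hmeas]].
  exists (Phi1 e), POracle. intros G [Gfun Greal] p X [HX Hp] Hdom.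
  set (q := qF p e).
  assert (Hq : tf (Phi1 e) p q) by (intro n; apply c_phi1).
  assert (F1 : forall k n, q k = S n -> U n X).
  { intros k n Hk. unfold q, qF in Hk.
    destruct (run e _ _) as [v|] eqn:Er; simpl in Hk; [|discriminate]. injection Hk as <-.
    apply run_sound in Er. destruct (proj2 (He _) (ex_intro _ v Er)) as [i [s [Em Hs]]].
    apply cpair_inj in Em as [<- Ec]. destruct (cstate_code p X (cfst (csnd k)) Hp) as [Hc _].
    rewrite Hc in Ec. apply code_inj in Ec. subst s. apply Hs, cyl_pref. }
  assert (F2 : forall n, U n X -> exists k, q k = S n).
  { intros n Hn. destruct (Hopen n X Hn) as [N HN].
    assert (Hc : subset (cyl (pref X N)) (U n)).
    { intros Y HY. apply HN. intros k Hk. rewrite HY by (rewrite pref_len; auto). apply nth_pref; auto. }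
    destruct (proj1 (He (cpair n (code (pref X N)))) (ex_intro _ n (ex_intro _ (pref X N) (conj eq_refl Hc)))) as [v Hv].
    destruct (run_complete _ _ _ Hv) as [t Ht].
    exists (cpair n (cpair N t)). unfold q, qF. autorewrite with cp.
    destruct (cstate_code p X N Hp) as [Hc' _]. rewrite Hc', Ht. reflexivity. }
  assert (Hdq : CN_dom q).
  { destruct (MLR_layer U X HU HX) as [i Hi]. exists i. intros k Hk. apply Hi. eapply F1; eauto. }
  destruct (Greal q q eq_refl Hdq) as [[s Hs] Hout].
  split.
  - exists s, q, s. repeat split; auto. intro n. constructor.
  - intros r [q' [s' [Hq' [Hs' Hr]]]]. assert (q' = q) by (eapply tf_det; eauto). subst q'.
    destruct (Hout s' Hs') as [y [Hy Hcn]].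
    assert (r = s') by (apply functional_extensionality; intro n; eapply eval_det; [apply Hr| constructor]). subst r.
    exists y. split; auto. intro Huy. destruct (F2 y Huy) as [k Hk]. exact (Hcn k Hk).
Qed.

Lemma least_ex (P : nat -> Prop) n : P n -> exists m, P m /\ forall j, j < m -> ~ P j.
Proof. induction n as [n IH] using (well_founded_induction lt_wf). intro Hn.
  destruct (classic (exists j, j < n /\ P j)) as [[j [Hj Pj]]|H].
  - apply (IH j Hj Pj).
  - exists n. split; auto. intros j Hj Pj. apply H; eauto. Qed.

Section P2.
Variable X : cantor.
Definition V (i : nat) : cantor -> Prop := fun Y => forall k, k < i -> Y k = X k.

Lemma cylV i s : subset (cyl s) (V i) <-> (i <= length s /\ forall k, k < i -> nth k s false = X k).
Proof. split.
  - intro H. set (Y := fun k => if k <? length s then nth k s false else negb (X k)).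
    assert (HY : cyl s Y) by (intros k Hk; unfold Y; rewrite (proj2 (Nat.ltb_lt _ _) Hk); reflexivity).
    specialize (H Y HY). unfold V in H.
    assert (Hl : i <= length s).
    { destruct (le_lt_dec i (length s)) as [|Hlt]; auto. specialize (H (length s) Hlt). unfold Y in H.
      rewrite Nat.ltb_irrefl in H. destruct (X (length s)); discriminate. }
    split; auto. intros k Hk. rewrite <- H by auto. unfold Y. rewrite (proj2 (Nat.ltb_lt k (length s))) by lia. reflexivity.
  - intros [Hl Hn] Y HY k Hk. rewrite HY by lia. auto.
Qed.

Lemma firstn_pref i s : i <= length s -> (forall k, k < i -> nth k s false = X k) -> firstn i s = pref X i.
Proof. intros Hl Hn. apply nth_ext with (d := false) (d' := false).
  - rewrite firstn_length_le, pref_len; auto.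
  - intros k Hk. rewrite firstn_length_le in Hk by auto. rewrite nth_firstn, (proj2 (Nat.ltb_lt _ _) Hk), nth_pref; auto. Qed.

Fixpoint allstr (k : nat) : list (list bool) :=
  match k with 0 => [[]] | S k => map (cons true) (allstr k) ++ map (cons false) (allstr k) end.
Lemma allstr_len k : length (allstr k) = 2 ^ k.
Proof. induction k; simpl; [reflexivity|]. rewrite length_app, !length_map, IHk. lia. Qed.
Lemma allstr_in k s : length s = k -> In s (allstr k).
Proof. revert s; induction k; intros [|b s] H; simpl in *; try discriminate; auto.
  apply in_or_app. destruct b; [left|right]; apply in_map; apply IHk; lia. Qed.

Lemma V_measure i : measure_open_le_pow2 (V i) i.
Proof. intros n L HL Hs.
  destruct (le_lt_dec i n) as [Hin|Hni].
  - assert (Hf : forall s, In s L -> firstn i s = pref X i).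
    { intros s Hin'. destruct (Hs s Hin') as [Hl Hsub]. apply cylV in Hsub as [Hl' Hn]. apply firstn_pref; auto. }
    assert (HN : NoDup (map (skipn i) L)).
    { apply NoDup_map_NoDup_ForallPairs; auto. intros a b Ha Hb Hab.
      rewrite <- (firstn_skipn i a), <- (firstn_skipn i b), Hab, (Hf a Ha), (Hf b Hb). reflexivity. }
    assert (Hinc : incl (map (skipn i) L) (allstr (n - i))).
    { intros s Hsm. apply in_map_iff in Hsm as [a [<- Ha]]. apply allstr_in. rewrite length_skipn.
      rewrite (proj1 (Hs a Ha)). reflexivity. }
    pose proof (NoDup_incl_length HN Hinc) as Hle. rewrite length_map, allstr_len in Hle.
    assert (E2 : 2 ^ n = 2 ^ (n - i) * 2 ^ i) by (rewrite <- Nat.pow_add_r; f_equal; lia).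
    rewrite E2. apply Nat.mul_le_mono_r. exact Hle.
  - destruct L as [|s L]; simpl; [lia|]. exfalso. destruct (Hs s (or_introl eq_refl)) as [Hl Hsub].
    apply cylV in Hsub as [Hl' _]. lia.
Qed.
End P2.

Definition Pa := PComp PSnd PFst.
Definition CSm Ph := PComp (CodeProg Ph) (PComp PFst PFst).
Definition Ap Ph := PComp PAdd (PPair (PComp PFst (CSm Ph)) (PComp PMul (PPair (PComp PSnd (CSm Ph)) PSnd))).
Definition Tprog Ph := PComp PAdd (PPair (PComp PSub (PPair Pa (Ap Ph))) (PComp PSub (PPair (Ap Ph) Pa))).
Definition Tf q Z := (csnd (cfst Z) - (fst (cstate q (cfst (cfst Z))) + snd (cstate q (cfst (cfst Z))) * csnd Z))
   + ((fst (cstate q (cfst (cfst Z))) + snd (cstate q (cfst (cfst Z))) * csnd Z) - csnd (cfst Z)).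
Lemma c_T p Ph q : computes p Ph q -> computes p (Tprog Ph) (Tf q).
Proof. intro H. eapply computes_ext; [unfold Tprog, Ap, CSm, Pa; prog3|].
  intro Z. cbv beta. autorewrite with cp. reflexivity. Qed.

Definition chi (n : nat) : baire := fun m => if Nat.eqb m n then 1 else 0.

Lemma part2 U : universal_ML_test U -> ~ W_le rep_baire rep_nat CN_dom CN rep_MLR rep_nat LAY_dom (LAY U).
Proof.
  intros [HU _] [Phi [Psi HW]].
  set (sel := fun X : cantor => epsilon (inhabits 0) (fun i => ~ U i X)).
  set (G := fun (q s : baire) => exists X, rep_MLR q X /\ s = chi (sel X)).
  assert (Hrep : forall q X X', rep_MLR q X -> rep_MLR q X' -> X = X').
  { intros q X X' [_ H1] [_ H2]. apply functional_extensionality. intro n. specialize (H1 n). rewrite H2 in H1.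
    destruct (X n), (X' n); simpl in H1; congruence. }
  assert (Greal : is_realizer rep_MLR rep_nat LAY_dom (LAY U) G).
  { split.
    - intros q s s' [X [HX ->]] [X' [HX' ->]]. rewrite (Hrep q X X' HX HX'). reflexivity.
    - intros q X HX Hd. split.
      + exists (chi (sel X)), X. auto.
      + intros s [X' [HX' ->]]. rewrite (Hrep q X' X HX' HX). exists (sel X). split.
        * intro m; reflexivity.
        * unfold LAY, sel. apply epsilon_spec. apply (MLR_layer U X HU). exact (proj1 HX). }
  destruct (HW G Greal z0 z0 eq_refl) as [[r [q [s0 [Hq [Gs _]]]]] _].
  { exists 0. intros k. unfold z0. discriminate. }
  destruct Gs as [X [[HX Hqx] _]].
  apply (HX (V X)); [|intros i k Hk; reflexivity].
  assert (HT : computes z0 (Tprog Phi) (Tf q)) by (apply c_T; exact Hq).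
  assert (Hcs : forall N, fst (cstate q N) = code (pref X N) /\ snd (cstate q N) = 2 ^ N) by (intro N; apply cstate_code; auto).
  split; [|split].
  - intros i Y HY. exists i. intros Z HZ k Hk. rewrite HZ by auto. auto.
  - exists (PMu (Tprog Phi)). intro m. split.
    + intros [i [s [Em Hs]]]. apply cylV in Hs as [Hl Hn].
      assert (H0 : Tf q (cpair m (code (skipn i s))) = 0).
      { unfold Tf. autorewrite with cp. subst m. autorewrite with cp. destruct (Hcs i) as [H1 H2]. rewrite H1, H2.
        assert (Hs : code s = code (firstn i s ++ skipn i s)) by (rewrite firstn_skipn; reflexivity).
        rewrite code_app, (firstn_length_le s Hl), (firstn_pref X i s Hl Hn) in Hs. rewrite Hs. lia. }
      destruct (least_ex (fun c => Tf q (cpair m c) = 0) _ H0) as [c [Hc Hmin]].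
      exists c. constructor.
      * pose proof (HT (cpair m c)) as Hx. rewrite Hc in Hx. exact Hx.
      * intros j Hj. destruct (Tf q (cpair m j)) as [|k] eqn:Ek; [exfalso; exact (Hmin j Hj Ek)|]. exists k. pose proof (HT (cpair m j)) as Hx. rewrite Ek in Hx. exact Hx.
    + intros [v Hv]. inversion Hv; subst.
      assert (E0 : Tf q (cpair m v) = 0) by (eapply eval_det; [apply HT| eassumption]).
      unfold Tf in E0. autorewrite with cp in E0. destruct (Hcs (cfst m)) as [Hc1 Hc2]. rewrite Hc1, Hc2 in E0.
      destruct (code_surj v) as [s2 Hs2].
      exists (cfst m), (pref X (cfst m) ++ s2). split.
      * rewrite code_app, pref_len, Hs2. rewrite <- (cpair_surj m) at 1. f_equal. lia.
      * apply cylV. rewrite length_app, pref_len. split; [lia|]. intros k Hk. rewrite app_nth1 by (rewrite pref_len; auto).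
        apply nth_pref; auto.
  - intro i. apply V_measure.
Qed.


Theorem proposition5p12 (U : nat -> cantor -> Prop) :
  universal_ML_test U ->
  sW_le rep_MLR rep_nat LAY_dom (LAY U) rep_baire rep_nat CN_dom CN /\
  ~ W_le rep_baire rep_nat CN_dom CN rep_MLR rep_nat LAY_dom (LAY U).
Proof.
  intro H. split; [apply part1 | apply part2]; exact H.
Qed.
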